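(* Let $p=(p_1,\dots,p_m)$ and $q=(q_1,\dots,q_m)$ be ordered $m$-tuples of distinct points of $\overline{\mathbf H^n_{\mathbb H}}$, each with the first $i$ points in $\partial\mathbf H^n_{\mathbb H}$ and the remaining points in $\mathbf H^n_{\mathbb H}$, and let $G_1,G_2$ be semi-normalized Gram matrices of lifts of $p$ and $q$, represented by $V_{G_1},V_{G_2}$. Then $p$ and $q$ are congruent under $\mathrm{PSp}(n,1)$ if and only if $O_{V_{G_1}}=O_{V_{G_2}}$.
   Context: Setting: $m\ge4$, $3\le i\le m$; $\mathbb H^{n,1}$ is the right quaternionic space $\mathbb H^{n+1}$ with form $\langle\mathbf z,\mathbf w\rangle=\bar w_{n+1}z_1+\bar w_2z_2+\cdots+\bar w_nz_n+\bar w_1z_{n+1}$; $\mathbf H^n_{\mathbb H}$ and $\partial\mathbf H^n_{\mathbb H}$ are the lines of negative and of nonzero null vectors; $\mathrm{PSp}(n,1)=\mathrm{Sp}(n,1)/\{\pm I\}$ with $\mathrm{Sp}(n,1)$ the form-preserving group; $p,q$ congruent means some $g\in\mathrm{PSp}(n,1)$ has $g(p_k)=q_k$ for all $k$. The Gram matrix of a lift is $g_{kj}=\langle\mathbf p_j,\mathbf p_k\rangle$; it is semi-normalized if $g_{kk}=0$ for $k\le i$, $g_{kk}=-1$ for $k>i$, $g_{1j}=1$ for $2\le j\le i$, $|g_{23}|=1$, and $g_{1j}=r_{1j}>0$ real for $i<j\le m$. It is represented by $V_G=(r_{1(i+1)},\dots,r_{1m},g_{23},\dots,g_{2m},g_{34},\dots,g_{3m},\dots,g_{(m-1)m})$,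 and $O_V=\{\bar\mu V\mu:\mu\text{ a unit quaternion}\}$ (componentwise). *)

(* Defs.v *)
From mathcomp Require Import all_boot all_order all_algebra.
From mathcomp Require Import reals.
Set Implicit Arguments. Unset Strict Implicit. Unset Printing Implicit Defensive.
Import Order.TTheory GRing.Theory Num.Theory.
Local Open Scope ring_scope.

Record quat (R : Type) := Quat { qre : R; qi : R; qj : R; qk : R }.

Section Quaternions.
Variable R : realType.

Definition qzero : quat R := Quat 0 0 0 0.
Definition qone : quat R := Quat 1 0 0 0.
Definition qreal (r : R) : quat R := Quat r 0 0 0.
Definition qadd (x y : quat R) : quat R :=
  Quat (qre x + qre y) (qi x + qi y) (qj x + qj y) (qk x + qk y).
Definition qmul (x y : quat R) : quat R :=
  Quat (qre x * qre y - qi x * qi y - qj x * qj y - qk x * qk y)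
       (qre x * qi y + qi x * qre y + qj x * qk y - qk x * qj y)
       (qre x * qj y - qi x * qk y + qj x * qre y + qk x * qi y)
       (qre x * qk y + qi x * qj y - qj x * qi y + qk x * qre y).
Definition qconj (x : quat R) : quat R := Quat (qre x) (- qi x) (- qj x) (- qk x).
Definition qnorm2 (x : quat R) : R := qre x ^+ 2 + qi x ^+ 2 + qj x ^+ 2 + qk x ^+ 2.
Definition qabs (x : quat R) : R := Num.sqrt (qnorm2 x).

Definition qsum (N : nat) (f : 'I_N -> quat R) : quat R := \big[qadd/qzero]_(k < N) f k.

(* vectors of the right quaternionic space H^{n+1}; coordinates z_1..z_{n+1}
   are indexed 0..n *)
Definition qvec (n : nat) := 'I_n.+1 -> quat R.

Definition Jidx (n : nat) (k : 'I_n.+1) : 'I_n.+1 :=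
  if val k == 0%N then ord_max else if val k == n then ord0 else k.

(* <z,w> = wbar_{n+1} z_1 + wbar_2 z_2 + ... + wbar_n z_n + wbar_1 z_{n+1} *)
Definition hform (n : nat) (z w : qvec n) : quat R :=
  qsum (fun k => qmul (qconj (w (Jidx k))) (z k)).

(* z and w span the same (right) quaternionic line, i.e. are the same point *)
Definition samept (n : nat) (z w : qvec n) : Prop :=
  exists l : quat R, l <> qzero /\ forall k, w k = qmul (z k) l.

(* nonzero null vector: lift of a point of the boundary *)
Definition null_vec (n : nat) (z : qvec n) : Prop :=
  (exists k, z k <> qzero) /\ hform z z = qzero.
(* negative vector: lift of a point of H^n_H *)
Definition neg_vec (n : nat) (z : qvec n) : Prop :=
  exists x : R, x < 0 /\ hform z z = qreal x.

Definition qmat (n : nat) := 'I_n.+1 -> 'I_n.+1 -> quat R.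
Definition mact (n : nat) (A : qmat n) (z : qvec n) : qvec n :=
  fun r => qsum (fun c => qmul (A r c) (z c)).
Definition in_Sp (n : nat) (A : qmat n) : Prop :=
  forall z w, hform (mact A z) (mact A w) = hform z w.

Definition gram (n m : nat) (P : 'I_m -> qvec n) : 'I_m -> 'I_m -> quat R :=
  fun k j => hform (P j) (P k).

(* entry access with 0-based nat indices (qzero out of range) *)
Definition gentry (m : nat) (G : 'I_m -> 'I_m -> quat R) (k j : nat) : quat R :=
  match (insub k : option 'I_m), (insub j : option 'I_m) with
  | Some k', Some j' => G k' j'
  | _, _ => qzero
  end.

(* semi-normalized (paper indices 1..m shifted to 0..m-1) *)
Definition semi_normalized (m i : nat) (G : 'I_m -> 'I_m -> quat R) : Prop :=
  [/\ (forall k, (k < i)%N -> gentry G k k = qzero),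
      (forall k, (i <= k < m)%N -> gentry G k k = qreal (-1)),
      (forall j, (1 <= j < i)%N -> gentry G 0 j = qone),
      qabs (gentry G 1 2) = 1 &
      (forall j, (i <= j < m)%N -> exists r : R, 0 < r /\ gentry G 0 j = qreal r)].

(* V_G = (r_{1(i+1)},...,r_{1m}, g_23,...,g_2m, g_34,...,g_3m, ..., g_{(m-1)m}) *)
Definition Vrep (m i : nat) (G : 'I_m -> 'I_m -> quat R) : seq (quat R) :=
  [seq gentry G 0 j | j <- iota i (m - i)] ++
  flatten [seq [seq gentry G k j | j <- iota k.+1 (m - k.+1)] | k <- iota 1 (m - 2)].

(* O_V = { mubar V mu : mu unit quaternion }, as a predicate *)
Definition orbitV (V W : seq (quat R)) : Prop :=
  exists mu : quat R, qnorm2 mu = 1 /\ W = [seq qmul (qmul (qconj mu) v) mu | v <- V].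

(* ordered m-tuple of distinct points, first i on the boundary, rest inside,
   given by lifts P *)
Definition config (n m i : nat) (P : 'I_m -> qvec n) : Prop :=
  [/\ (forall k : 'I_m, (k < i)%N -> null_vec (P k)),
      (forall k : 'I_m, (i <= k)%N -> neg_vec (P k)) &
      (forall j k : 'I_m, j != k -> ~ samept (P j) (P k))].

(* p, q congruent: some g in Sp(n,1) (hence in PSp(n,1)) maps p_k to q_k *)
Definition congruent (n m : nat) (P Q : 'I_m -> qvec n) : Prop :=
  exists A : qmat n, in_Sp A /\ forall k, samept (mact A (P k)) (Q k).

End Quaternions.

(* Main.v *)
From HB Require Import structures.
Require Import Defs.
From mathcomp Require Import all_boot all_order all_algebra.
From mathcomp Require Import reals.
From mathcomp Require Import ring lra zify.
Set Implicit Arguments. Unset Strict Implicit. Unset Printing Implicit Defensive.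
Import Order.TTheory GRing.Theory Num.Theory.
Local Open Scope ring_scope.

Section QR.
Variable R : realType.
Definition q2t (x : quat R) := (qre x, qi x, qj x, qk x).
Definition t2q (t : R * R * R * R) := Quat t.1.1.1 t.1.1.2 t.1.2 t.2.
Lemma q2tK : cancel q2t t2q. Proof. by case. Qed.
End QR.
HB.instance Definition _ (R : realType) := Equality.copy (quat R) (can_type (@q2tK R)).
HB.instance Definition _ (R : realType) := Choice.copy (quat R) (can_type (@q2tK R)).

Section QR2.
Variable R : realType.
Definition qopp (x : quat R) := Quat (- qre x) (- qi x) (- qj x) (- qk x).
Ltac qsolve := rewrite ?/associative ?/commutative ?/left_id ?/right_id ?/left_inverse ?/left_distributive ?/right_distributive; intros; repeat match goal with x : quat _ |- _ => destruct x end; rewrite /qadd /qmul /qopp /qconj /qreal /qzero /qone /=; congr Quat; ring.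
Lemma qaddA : associative (@qadd R). Proof. qsolve. Qed.
Lemma qaddC : commutative (@qadd R). Proof. qsolve. Qed.
Lemma qadd0 : left_id (qzero R) (@qadd R). Proof. qsolve. Qed.
Lemma qaddN : left_inverse (qzero R) qopp (@qadd R). Proof. qsolve. Qed.
Lemma qmulA : associative (@qmul R). Proof. qsolve. Qed.
Lemma q1mul : left_id (qone R) (@qmul R). Proof. qsolve. Qed.
Lemma qmul1 : right_id (qone R) (@qmul R). Proof. qsolve. Qed.
Lemma qmulDl : left_distributive (@qmul R) (@qadd R). Proof. qsolve. Qed.
Lemma qmulDr : right_distributive (@qmul R) (@qadd R). Proof. qsolve. Qed.
End QR2.
HB.instance Definition _ (R : realType) := GRing.isZmodule.Build (quat R) (@qaddA R) (@qaddC R) (@qadd0 R) (@qaddN R).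
Lemma qone_neq0 (R : realType) : (qone R : quat R) != 0.
Proof. apply/eqP=> /(congr1 (@qre R)) /= /eqP; by rewrite oner_eq0. Qed.
HB.instance Definition _ (R : realType) := GRing.Zmodule_isNzRing.Build (quat R) (@qmulA R) (@q1mul R) (@qmul1 R) (@qmulDl R) (@qmulDr R) (@qone_neq0 R).

Section T.
Variable R : realType.
Lemma qaddE (x y : quat R) : qadd x y = x + y. Proof. by []. Qed.
Lemma qmulE (x y : quat R) : qmul x y = x * y. Proof. by []. Qed.
Lemma qzeroE : qzero R = 0. Proof. by []. Qed.
Lemma qoneE : qone R = 1. Proof. by []. Qed.
Lemma qsumE N (f : 'I_N -> quat R) : qsum f = \sum_(k < N) f k. Proof. by []. Qed.
End T.

Section Quat.
Variable R : realType.
Implicit Types x y z : quat R. Implicit Types r s : R.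
Ltac qs := intros; repeat match goal with x : quat _ |- _ => destruct x end; rewrite /qadd /qmul /qopp /qconj /qreal /qzero /qone /qnorm2 /=; try congr Quat; ring.
Lemma qsolve_add x y : x + y = qadd x y. Proof. by []. Qed.
Lemma qconjD x y : qconj (x + y) = qconj x + qconj y.
Proof. rewrite !qsolve_add. qs. Qed.
Lemma qconjM x y : qconj (x * y) = qconj y * qconj x.
Proof. change (qconj (qmul x y) = qmul (qconj y) (qconj x)). qs. Qed.
Lemma qconjK x : qconj (qconj x) = x. Proof. qs. Qed.
Lemma qconj0 : qconj (0 : quat R) = 0. Proof. change (qconj (qzero R) = qzero R); qs. Qed.
Lemma qconj1 : qconj (1 : quat R) = 1. Proof. change (qconj (qone R) = qone R); qs. Qed.
Lemma qconjN x : qconj (- x) = - qconj x. Proof. change (qconj (qopp x) = qopp (qconj x)); qs. Qed.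
Lemma qconjB x y : qconj (x - y) = qconj x - qconj y. Proof. by rewrite qconjD qconjN. Qed.
Lemma qconj_sum N (f : 'I_N -> quat R) : qconj (\sum_k f k) = \sum_k qconj (f k).
Proof. apply: (big_morph _ qconjD qconj0). Qed.
Lemma qre_sum N (f : 'I_N -> quat R) : qre (\sum_k f k) = \sum_k qre (f k).
Proof. by apply: (big_morph (@qre R)). Qed.
Lemma qreal_mulC r x : qreal r * x = x * qreal r.
Proof. change (qmul (qreal r) x = qmul x (qreal r)); qs. Qed.
Lemma qrealM r s : qreal (r * s) = qreal r * qreal s.
Proof. change (qreal (r * s) = qmul (qreal r) (qreal s)); qs. Qed.
Lemma qrealD r s : qreal (r + s) = qreal r + qreal s.
Proof. change (qreal (r + s) = qadd (qreal r) (qreal s)); qs. Qed.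
Lemma qrealN r : qreal (- r) = - qreal r.
Proof. change (qreal (- r) = qopp (qreal r)); qs. Qed.
Lemma qreal1 : qreal (1:R) = (1 : quat R). Proof. by []. Qed.
Lemma qreal0 : qreal (0:R) = (0 : quat R). Proof. by []. Qed.
Lemma qconj_real r : qconj (qreal r) = qreal r.
Proof. rewrite /qconj /qreal /=; congr Quat; by rewrite oppr0. Qed.
Lemma qreal_inj r s : qreal r = qreal s -> r = s.
Proof. by move=> /(congr1 (@qre R)). Qed.
Lemma qconj_mulr x : qconj x * x = qreal (qnorm2 x).
Proof. change (qmul (qconj x) x = qreal (qnorm2 x)); qs. Qed.
Lemma qmulr_conj x : x * qconj x = qreal (qnorm2 x).
Proof. change (qmul x (qconj x) = qreal (qnorm2 x)); qs. Qed.
Lemma qnorm2M x y : qnorm2 (x * y) = qnorm2 x * qnorm2 y.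
Proof. change (qnorm2 (qmul x y) = qnorm2 x * qnorm2 y); qs. Qed.
Lemma qnorm2_conj x : qnorm2 (qconj x) = qnorm2 x.
Proof. qs. Qed.
Lemma qnorm2_ge0 x : 0 <= qnorm2 x.
Proof. case: x => a b c d; rewrite /qnorm2 /=. by rewrite !addr_ge0 // sqr_ge0. Qed.
Lemma qnorm2_eq0 x : qnorm2 x = 0 -> x = 0.
Proof.
case: x => a b c d; rewrite /qnorm2 /= => H.
have ha : a = 0 by nra. have hb : b = 0 by nra. have hc : c = 0 by nra. have hd : d = 0 by nra.
by rewrite ha hb hc hd.
Qed.
Lemma qnorm2_real r : qnorm2 (qreal r) = r ^+ 2.
Proof. rewrite /qnorm2 /=; ring. Qed.
Lemma qnorm2_1 : qnorm2 (1 : quat R) = 1.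
Proof. rewrite /qnorm2 /=; ring. Qed.
Lemma qnorm2N x : qnorm2 (- x) = qnorm2 x.
Proof. change (qnorm2 (qopp x) = qnorm2 x); qs. Qed.

Definition qinv x := qreal (qnorm2 x)^-1 * qconj x.
Lemma qnorm2_neq0 x : x != 0 -> qnorm2 x != 0.
Proof. by move=> h; apply/eqP=> /qnorm2_eq0 /eqP; rewrite (negPf h). Qed.
Lemma qmulVl x : x != 0 -> qinv x * x = 1.
Proof. move=> /qnorm2_neq0 h. by rewrite /qinv -mulrA qconj_mulr -qrealM mulVf. Qed.
Lemma qmulV x : x != 0 -> x * qinv x = 1.
Proof. move=> /qnorm2_neq0 h. by rewrite /qinv qreal_mulC mulrA qmulr_conj -qrealM mulfV. Qed.
Lemma qconj_eq0 x : (qconj x == 0) = (x == 0).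
Proof. apply/eqP/eqP => [h|->]; last exact: qconj0. by rewrite -[x]qconjK h qconj0. Qed.

Lemma unit_conj x : qnorm2 x = 1 -> x * qconj x = 1 /\ qconj x * x = 1.
Proof. by move=> h; rewrite qmulr_conj qconj_mulr h. Qed.
End Quat.


Section Vec.
Variable R : realType.
Variable n : nat.
Local Notation vec := (qvec R n).
Implicit Types z w u d : vec.

Lemma val_Jidx (k : 'I_n.+1) :
  val (Jidx k) = if val k == 0%N then n else if val k == n then 0%N else val k.
Proof. rewrite /Jidx; by case: ifP => //; case: ifP. Qed.

Lemma Jidx_inv (k : 'I_n.+1) : Jidx (Jidx k) = k.
Proof.
apply: val_inj; rewrite !val_Jidx; move: (val k) => v.
case: (eqVneq v 0%N) => [->|h0].
  by rewrite eqxx; case: (eqVneq n 0%N) => [->|hn] //; rewrite (negPf hn).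
case: (eqVneq v n) => [->|hn]; first by rewrite eqxx.
by rewrite (negPf h0) (negPf hn).
Qed.

Lemma hformE z w : hform z w = \sum_k qconj (w (Jidx k)) * z k.
Proof. by []. Qed.

Lemma hform_ext z z' w w' : z =1 z' -> w =1 w' -> hform z w = hform z' w'.
Proof. by move=> hz hw; rewrite !hformE; apply: eq_bigr => k _; rewrite hz hw. Qed.

Lemma hformDl z z' w : hform (fun r => z r + z' r) w = hform z w + hform z' w.
Proof. by rewrite !hformE -big_split; apply: eq_bigr => k _; rewrite mulrDr. Qed.

Lemma hformZl z a w : hform (fun r => z r * a) w = hform z w * a.
Proof. by rewrite !hformE mulr_suml; apply: eq_bigr => k _; rewrite mulrA. Qed.

Lemma hformNl z w : hform (fun r => - z r) w = - hform z w.
Proof. rewrite -mulrN1 -hformZl; apply: hform_ext => // r; by rewrite mulrN1. Qed.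

Lemma hformBl z z' w : hform (fun r => z r - z' r) w = hform z w - hform z' w.
Proof. by rewrite hformDl hformNl. Qed.

Lemma hform_sym z w : hform z w = qconj (hform w z).
Proof.
rewrite !hformE qconj_sum (reindex_inj (inv_inj (@Jidx_inv))) /=.
by apply: eq_bigr => k _; rewrite qconjM qconjK Jidx_inv.
Qed.

Lemma hformDr z w w' : hform z (fun r => w r + w' r) = hform z w + hform z w'.
Proof. by rewrite hform_sym hformDl qconjD -!hform_sym. Qed.

Lemma hformZr z w a : hform z (fun r => w r * a) = qconj a * hform z w.
Proof. by rewrite hform_sym hformZl qconjM -!hform_sym. Qed.

Lemma hformNr z w : hform z (fun r => - w r) = - hform z w.
Proof. by rewrite hform_sym hformNl qconjN -!hform_sym. Qed.

Lemma hformBr z w w' : hform z (fun r => w r - w' r) = hform z w - hform z w'.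
Proof. by rewrite hformDr hformNr. Qed.

Lemma mact_ext (A : qmat R n) z z' : z =1 z' -> mact A z =1 mact A z'.
Proof. by move=> h r; rewrite /mact /qsum; apply: eq_bigr => c _; rewrite h. Qed.

Lemma mactE (A : qmat R n) z r : mact A z r = \sum_c A r c * z c.
Proof. by []. Qed.

Lemma mactZ (A : qmat R n) z a r : mact A (fun c => z c * a) r = mact A z r * a.
Proof. by rewrite !mactE mulr_suml; apply: eq_bigr => c _; rewrite mulrA. Qed.

Lemma mactD (A : qmat R n) z z' r : mact A (fun c => z c + z' c) r = mact A z r + mact A z' r.
Proof. by rewrite !mactE -big_split; apply: eq_bigr => c _; rewrite mulrDr. Qed.

Lemma mactN (A : qmat R n) z r : mact A (fun c => - z c) r = - mact A z r.
Proof. by rewrite -mulrN1 -mactZ; apply: mact_ext => c; rewrite mulrN1. Qed.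

Lemma mactB (A : qmat R n) z z' r : mact A (fun c => z c - z' c) r = mact A z r - mact A z' r.
Proof. by rewrite mactD mactN. Qed.

Definition mmul (B A : qmat R n) : qmat R n := fun r c => \sum_k B r k * A k c.

Lemma mact_mmul B A z r : mact (mmul B A) z r = mact B (mact A z) r.
Proof.
rewrite !mactE /mmul.
under eq_bigr do rewrite mulr_suml.
rewrite exchange_big /=; apply: eq_bigr => k _.
by rewrite mactE mulr_sumr; apply: eq_bigr => c _; rewrite mulrA.
Qed.

Lemma in_Sp_mmul B A : in_Sp B -> in_Sp A -> in_Sp (mmul B A).
Proof.
move=> hB hA z w.
rewrite (hform_ext (mact_mmul B A z) (mact_mmul B A w)).
by rewrite hB hA.
Qed.

Definition dmat (a : quat R) : qmat R n := fun r c => if r == c then a else 0.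

Lemma mact_dmat a z r : mact (dmat a) z r = a * z r.
Proof.
rewrite mactE (bigD1 r) //= /dmat eqxx big1 ?addr0 // => c hc.
by rewrite eq_sym (negPf hc) mul0r.
Qed.

Lemma in_Sp_neg : in_Sp (dmat (-1)).
Proof.
move=> z w.
rewrite (hform_ext (mact_dmat (-1) z) (mact_dmat (-1) w)).
have h1 : forall v : vec, (fun r => -1 * v r) =1 (fun r => - v r) by move=> v r; rewrite mulN1r.
by rewrite (hform_ext (h1 z) (h1 w)) hformNl hformNr opprK.
Qed.

Definition Tm (d : vec) (kp : quat R) : qmat R n :=
  fun r c => (if r == c then 1 else 0) + d r * kp * qconj (d (Jidx c)).

Lemma mact_Tm d kp z r : mact (Tm d kp) z r = z r + d r * (kp * hform z d).
Proof.
rewrite mactE /Tm.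
under eq_bigr do rewrite mulrDl.
rewrite big_split /=; congr (_ + _).
  rewrite (bigD1 r) //= eqxx mul1r big1 ?addr0 // => c hc.
  by rewrite eq_sym (negPf hc) mul0r.
rewrite hformE mulr_sumr mulr_sumr; apply: eq_bigr => c _.
by rewrite !mulrA.
Qed.

Lemma in_Sp_Tm d kp : kp + qconj kp + qconj kp * hform d d * kp = 0 -> in_Sp (Tm d kp).
Proof.
move=> hk z w.
rewrite (hform_ext (mact_Tm d kp z) (mact_Tm d kp w)).
rewrite hformDl !hformDr !hformZl !hformZr.
rewrite [hform d w]hform_sym.
set a := hform z d; set b := hform w d; set c := hform d d.
rewrite !qconjM -addrA.
have -> : qconj b * qconj kp * a + (qconj b * (kp * a) + qconj b * qconj kp * c * (kp * a))
   = qconj b * (kp + qconj kp + qconj kp * c * kp) * a.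
  by rewrite !mulrDr !mulrDl !mulrA addrCA addrA.
by rewrite hk mulr0 mul0r addr0.
Qed.
End Vec.


Section Key.
Variable R : realType.
Variable n : nat.
Local Notation vec := (qvec R n).
Implicit Types z w u d : vec.

Lemma hform_diag z : z ord0 = z ord_max -> qre (hform z z) = \sum_k qnorm2 (z k).
Proof.
move=> h0; rewrite hformE qre_sum; apply: eq_bigr => k _.
have -> : z (Jidx k) = z k.
  rewrite /Jidx; case: (eqVneq (val k) 0%N) => [k0|kn0].
    by rewrite -h0; congr z; apply: val_inj.
  case: (eqVneq (val k) n) => [kn|knn] //.
  by rewrite h0; congr z; apply: val_inj; rewrite /= kn.
by rewrite qconj_mulr.
Qed.

Lemma hform_diag_ge0 z : z ord0 = z ord_max -> 0 <= qre (hform z z).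
Proof. move=> h; rewrite hform_diag //; apply: sumr_ge0 => k _; exact: qnorm2_ge0. Qed.

Lemma key u d r : hform u u = qreal r -> r < 0 -> hform d u = 0 -> hform d d = 0 ->
  forall k, d k = 0.
Proof.
move=> hu hr hdu hdd.
set al := u ord_max - u ord0; set be := d ord_max - d ord0.
have hal : al != 0.
  apply/eqP => /eqP; rewrite subr_eq0 => /eqP e.
  have := hform_diag_ge0 (esym e); rewrite hu /=; lra.
pose b := - (qinv al * be).
pose w := fun k => d k + u k * b.
have hw0 : w ord0 = w ord_max.
  apply/eqP; rewrite eq_sym -subr_eq0; apply/eqP.
  rewrite /w opprD addrACA -mulrBl -/be -/al /b mulrN mulrA qmulV // mul1r.
  exact: subrr.
have hww : hform w w = qconj b * qreal r * b.
  rewrite /w hformDl !hformDr !hformZl !hformZr hdd hu.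
  rewrite [hform u d]hform_sym hdu qconj0.
  by rewrite mulr0 mul0r !add0r.
have hb : b = 0.
  have := hform_diag_ge0 hw0; rewrite hww -mulrA qreal_mulC mulrA qconj_mulr -qrealM /=.
  move=> h; apply: qnorm2_eq0; have := qnorm2_ge0 b; nra.
have hwd : w =1 d by move=> k; rewrite /w hb mulr0 addr0.
have hd0 : d ord0 = d ord_max by rewrite -!hwd.
have := hform_diag hd0; rewrite hdd /= => /esym /eqP.
rewrite psumr_eq0 => [/allP hall k|k _]; last exact: qnorm2_ge0.
apply: qnorm2_eq0; apply/eqP; apply: (implyP (hall k _)) => //; exact: mem_index_enum.
Qed.
End Key.


Section Refl.
Variable R : realType.
Variable n : nat.
Local Notation vec := (qvec R n).
Implicit Types z w u d x y s : vec.

Lemma kappa_ok (p : quat R) : p != 0 ->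
  let k := - qinv p in k + qconj k + qconj k * (p + qconj p) * k = 0.
Proof.
move=> hp /=.
have e1 : qconj (qinv p) * qconj p = 1 by rewrite -qconjM qmulV // qconj1.
have e2 : p * qinv p = 1 by rewrite qmulV.
rewrite qconjN mulNr mulrNN mulrDr mulrDl -(mulrA _ p) e2 mulr1 e1 mul1r.
rewrite -opprD [qinv p + _]addrC; exact: addNr.
Qed.

Lemma reflect_step x y : hform x x = hform y y ->
  hform (fun r => x r - y r) (fun r => x r - y r) != 0 ->
  exists T, [/\ in_Sp T, (forall r, mact T x r = y r) &
    (forall s, hform s (fun r => x r - y r) = 0 -> forall r, mact T s r = s r)].
Proof.
set d := fun r => x r - y r => hxx hd.
set p := hform x d.
have hdd : hform d d = p + qconj p.
  rewrite /p -hform_sym /d !hformBl !hformBr hxx.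
  by rewrite opprB.
have hp : p != 0.
  by apply: contraNneq hd => hp0; rewrite hdd hp0 qconj0 addr0.
exists (Tm d (- qinv p)); split.
- apply: in_Sp_Tm; rewrite hdd; exact: kappa_ok.
- move=> r; rewrite mact_Tm -/p mulNr qmulVl // mulrN1 /d.
  by rewrite opprB addrC subrK.
- by move=> s hs r; rewrite mact_Tm hs !mulr0 addr0.
Qed.
End Refl.


Section Witt.
Variable R : realType.
Variable n : nat.
Local Notation vec := (qvec R n).

Lemma qreal_m2 : qreal (-2 : R) = - (1 + 1).
Proof. by rewrite qrealN (_ : (2:R) = 1 + 1) // qrealD. Qed.

Lemma par_nonzero (a b : vec) (c : R) : hform a a = qreal c -> hform b b = qreal c -> c < 0 ->
  hform (fun r => a r - b r) (fun r => a r - b r) != 0 \/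
  hform (fun r => - a r - b r) (fun r => - a r - b r) != 0.
Proof.
move=> ha hb hc.
case: (eqVneq (hform (fun r => a r - b r) (fun r => a r - b r)) 0) => h1; last by left.
right; apply/eqP => h2.
move: h1 h2; rewrite !hformBl !hformBr !hformNl !hformNr opprK ha hb.
move=> /(congr1 (@qre R)) /= e1 /(congr1 (@qre R)) /= e2.
have : c < c by lra. by rewrite ltxx.
Qed.

Lemma witt m (P Q : 'I_m -> vec) (o0 o1 : 'I_m) :
  (forall k j, hform (P k) (P j) = hform (Q k) (Q j)) ->
  hform (P o0) (P o0) = 0 -> hform (P o1) (P o1) = 0 -> hform (P o1) (P o0) = 1 ->
  exists A, in_Sp A /\ forall k r, mact A (P k) r = Q k r.
Proof.
move=> hG h00 h11 h10.
pose u := fun r => P o0 r - P o1 r.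
pose u' := fun r => Q o0 r - Q o1 r.
have hu : hform u u = qreal (-2).
  rewrite /u !hformBl !hformBr h00 h11 [hform (P o0) (P o1)]hform_sym h10 qconj1 qreal_m2.
  by rewrite !sub0r (subr0 (1 : quat R)) opprD.
have hu' : hform u' u' = qreal (-2).
  by rewrite -hu /u /u' !hformBl !hformBr !hG.
have hm2 : (-2 : R) < 0 by lra.
have hPu : forall k, hform (P k) u = hform (Q k) u'.
  by move=> k; rewrite /u /u' !hformBr !hG.
have base : exists A, in_Sp A /\ forall r, mact A u r = u' r.
  have huu : hform u u = hform u' u' by rewrite hu hu'.
  case: (eqVneq (hform (fun r => u r - u' r) (fun r => u r - u' r)) 0) => hc1; last first.
    by case: (reflect_step huu hc1) => T [hT hTx _]; exists T.
  pose v := fun r => - u r.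
  have hvv : hform v v = hform u' u' by rewrite /v hformNl hformNr opprK.
  have hc2 : hform (fun r => v r - u' r) (fun r => v r - u' r) != 0.
    by case: (par_nonzero hu hu' hm2) => [|//]; rewrite hc1 eqxx.
  case: (reflect_step hvv hc2) => T [hT hTx _].
  exists (mmul T (@dmat R n (-1))); split; first exact: in_Sp_mmul hT (@in_Sp_neg R n).
  move=> r; rewrite mact_mmul -hTx; apply: mact_ext => c.
  by rewrite mact_dmat mulN1r.
have step : forall k, (k <= m)%N -> exists A, [/\ in_Sp A, (forall r, mact A u r = u' r) &
     forall j : 'I_m, (j < k)%N -> forall r, mact A (P j) r = Q j r].
  elim=> [_|k IH hk].
    by case: base => A [hA hAu]; exists A; split.
  case: (IH (ltnW hk)) => A [hA hAu hAP].
  pose K := Ordinal hk.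
  pose x := mact A (P K).
  have hxx : hform x x = hform (Q K) (Q K) by rewrite /x hA hG.
  have hxu : forall z, hform z (mact A u) = hform z u'.
    by move=> z; apply: hform_ext.
  have hdu : hform (fun r => x r - Q K r) u' = 0.
    by rewrite hformBl -hxu /x hA hPu subrr.
  have hQd : forall j : 'I_m, (j < k)%N -> hform (Q j) (fun r => x r - Q K r) = 0.
    move=> j hj; rewrite hformBr.
    rewrite -(hform_ext (hAP j hj) (fun r => erefl (x r))) /x hA hG.
    exact: subrr.
  case: (eqVneq (hform (fun r => x r - Q K r) (fun r => x r - Q K r)) 0) => hc.
    have hd0 := key hu' hm2 hdu hc.
    exists A; split => // j; rewrite ltnS leq_eqVlt => /orP [/eqP hj|hj] r; last exact: hAP.
    have -> : j = K by apply: val_inj.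
    by apply/eqP; rewrite -subr_eq0; apply/eqP; apply: hd0.
  case: (reflect_step hxx hc) => T [hT hTx hTs].
  exists (mmul T A); split.
  - exact: in_Sp_mmul.
  - move=> r; rewrite mact_mmul (mact_ext _ hAu) hTs //.
    by rewrite hform_sym hdu qconj0.
  - move=> j; rewrite ltnS leq_eqVlt => /orP [/eqP hj|hj] r.
      have -> : j = K by apply: val_inj.
      by rewrite mact_mmul hTx.
    by rewrite mact_mmul (mact_ext _ (hAP j hj)) hTs // hQd.
case: (step m (leqnn m)) => A [hA _ hAP].
by exists A; split => // k; apply: hAP.
Qed.
End Witt.


Section Orb.
Variable R : realType.
Definition phi (mu x : quat R) := qconj mu * x * mu.

Lemma phiE mu x : qmul (qmul (qconj mu) x) mu = phi mu x. Proof. by []. Qed.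

Lemma phi_comp mu nu x : phi nu (phi mu x) = phi (mu * nu) x.
Proof. by rewrite /phi qconjM !mulrA. Qed.

Lemma phi1 x : phi 1 x = x.
Proof. by rewrite /phi qconj1 mul1r mulr1. Qed.

Lemma orbit_map (V : seq (quat R)) mu : qnorm2 mu = 1 ->
  forall W, orbitV V W <-> orbitV (map (phi mu) V) W.
Proof.
move=> hmu W; split.
  case=> nu [hnu ->]; exists (qconj mu * nu); split.
    by rewrite qnorm2M qnorm2_conj hmu hnu mulr1.
  rewrite -map_comp; apply: eq_map => x /=; rewrite !phiE phi_comp mulrA.
  by case: (unit_conj hmu) => -> _; rewrite mul1r.
case=> nu [hnu ->]; exists (mu * nu); split.
  by rewrite qnorm2M hmu hnu mulr1.
rewrite -map_comp; apply: eq_map => x /=; by rewrite !phiE phi_comp.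
Qed.

Lemma orbit_refl (V : seq (quat R)) : orbitV V V.
Proof.
exists 1; split; first exact: qnorm2_1.
by rewrite -[LHS]map_id; apply: eq_map => x; rewrite phiE phi1.
Qed.

Definition idxs (m i : nat) : seq (nat * nat) :=
  [seq (0%N, j) | j <- iota i (m - i)] ++
  flatten [seq [seq (k, j) | j <- iota k.+1 (m - k.+1)] | k <- iota 1 (m - 2)].

Lemma VrepE m i (G : 'I_m -> 'I_m -> quat R) :
  Vrep i G = map (fun p => gentry G p.1 p.2) (idxs m i).
Proof.
rewrite /Vrep /idxs map_cat -map_comp map_flatten -map_comp; congr (_ ++ flatten _).
by apply: eq_map => k /=; rewrite -map_comp.
Qed.

Lemma mem_idxs0 m i j : (i <= j < m)%N -> (0%N, j) \in idxs m i.
Proof.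
move=> /andP [h1 h2]; rewrite mem_cat; apply/orP; left.
apply: map_f; rewrite mem_iota h1 /=; lia.
Qed.

Lemma mem_idxs m i k j : (1 <= k)%N -> (k < j < m)%N -> (k, j) \in idxs m i.
Proof.
move=> h1 /andP [h2 h3]; rewrite mem_cat; apply/orP; right.
apply/flattenP; exists [seq (k, j) | j <- iota k.+1 (m - k.+1)].
  apply: (map_f (fun k => [seq (k, j) | j <- iota k.+1 (m - k.+1)])).
  rewrite mem_iota; lia.
apply: map_f; rewrite mem_iota; lia.
Qed.

Lemma gentryE m (G : 'I_m -> 'I_m -> quat R) k j (hk : (k < m)%N) (hj : (j < m)%N) :
  gentry G k j = G (Ordinal hk) (Ordinal hj).
Proof. by rewrite /gentry (insubT (fun x => x < m)%N hk) (insubT (fun x => x < m)%N hj). Qed.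

Lemma gentry_ord m (G : 'I_m -> 'I_m -> quat R) (k j : 'I_m) : gentry G k j = G k j.
Proof. by rewrite /gentry !valK. Qed.

Lemma Vrep_phi m i (G H : 'I_m -> 'I_m -> quat R) mu :
  (forall k j, H k j = phi mu (G k j)) -> Vrep i H = map (phi mu) (Vrep i G).
Proof.
move=> h; rewrite !VrepE -map_comp; apply: eq_map => -[k j] /=.
rewrite /gentry; case: (insub k : option 'I_m) => [k'|]; case: (insub j : option 'I_m) => [j'|] //=;
  by rewrite /phi /qzero (_ : Quat 0 0 0 0 = 0) // mulr0 mul0r.
Qed.

Lemma Vrep_phi_inv m i (G H : 'I_m -> 'I_m -> quat R) mu :
  Vrep i H = map (phi mu) (Vrep i G) ->
  forall p, p \in idxs m i -> gentry H p.1 p.2 = phi mu (gentry G p.1 p.2).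
Proof.
rewrite !VrepE -map_comp => /esym e p hp.
by have /eq_in_map /(_ p hp) := e.
Qed.
End Orb.


Section SN.
Variable R : realType.
Variables (m i : nat) (G : 'I_m -> 'I_m -> quat R).
Hypothesis SN : semi_normalized i G.

Lemma sn_null (k : 'I_m) : (k < i)%N -> G k k = 0.
Proof. case: SN => h _ _ _ _ hk; rewrite -gentry_ord; exact: h. Qed.
Lemma sn_neg (k : 'I_m) : (i <= k)%N -> G k k = - 1.
Proof.
case: SN => _ h _ _ _ hk; rewrite -gentry_ord h ?ltn_ord ?hk //.
by rewrite qrealN.
Qed.
Lemma sn_one (k j : 'I_m) : val k = 0%N -> (1 <= j < i)%N -> G k j = 1.
Proof. case: SN => _ _ h _ _ hk hj; rewrite -gentry_ord hk; exact: h. Qed.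
Lemma sn_abs (k j : 'I_m) : val k = 1%N -> val j = 2%N -> qnorm2 (G k j) = 1.
Proof.
case: SN => _ _ _ h _ hk hj; move: h; rewrite -hj -hk gentry_ord /qabs => h.
by have := sqr_sqrtr (qnorm2_ge0 (G k j)); rewrite h expr1n.
Qed.
Lemma sn_pos (k j : 'I_m) : val k = 0%N -> (i <= j)%N -> exists r, 0 < r /\ G k j = qreal r.
Proof. case: SN => _ _ _ _ h hk hj; rewrite -gentry_ord hk; apply: h; by rewrite hj ltn_ord. Qed.
End SN.

Section Dir1.
Variable R : realType.

Lemma unit_eq (a b : quat R) : qnorm2 a = 1 -> qconj a * b = 1 -> b = a.
Proof.
move=> ha hb; case: (unit_conj ha) => h1 _.
by rewrite -[b]mul1r -h1 -mulrA hb mulr1.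
Qed.

Lemma cong_gram n m i (P Q : 'I_m -> qvec R n) : (3 <= i <= m)%N ->
  semi_normalized i (gram P) -> semi_normalized i (gram Q) -> congruent P Q ->
  exists mu, qnorm2 mu = 1 /\ forall k j, gram Q k j = phi mu (gram P k j).
Proof.
move=> /andP [hi3 him] SP SQ [A [hA hs]].
have hm0 : (0 < m)%N by lia. have hm1 : (1 < m)%N by lia. have hm2 : (2 < m)%N by lia.
pose o0 := Ordinal hm0; pose o1 := Ordinal hm1; pose o2 := Ordinal hm2.
pose W k l := forall r, Q k r = mact A (P k) r * l.
have gQ : forall k j lk lj, W k lk -> W j lj -> gram Q k j = qconj lk * gram P k j * lj.
  move=> k j lk lj hk hj; rewrite /gram (hform_ext hj hk) hformZl hformZr hA.
  by [].
have wit : forall k, exists l, W k l.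
  by move=> k; case: (hs k) => l [_ hl]; exists l.
have c0j : forall l lj (j : 'I_m), W o0 l -> W j lj -> (1 <= j < i)%N -> qconj l * lj = 1.
  move=> l lj j hl hj hji; have := gQ _ _ _ _ hl hj.
  by rewrite (sn_one SP (k:=o0) (erefl _) hji) (sn_one SQ (k:=o0) (erefl _) hji) mulr1 => <-.
have A1 : forall l, W o0 l -> qnorm2 l = 1.
  move=> l hl; case: (wit o1) => l1 h1; case: (wit o2) => l2 h2.
  have /(congr1 (@qnorm2 R)) e1 := c0j _ _ o1 hl h1 (ltac:(rewrite /=; lia)).
  have /(congr1 (@qnorm2 R)) e2 := c0j _ _ o2 hl h2 (ltac:(rewrite /=; lia)).
  have /(congr1 (@qnorm2 R)) e3 := gQ _ _ _ _ h1 h2.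
  rewrite !qnorm2M !qnorm2_conj qnorm2_1 in e1 e2.
  rewrite !qnorm2M !qnorm2_conj (sn_abs SP (k:=o1) (j:=o2) (erefl _) (erefl _)) (sn_abs SQ (k:=o1) (j:=o2) (erefl _) (erefl _)) in e3.
  have := qnorm2_ge0 l; have := qnorm2_ge0 l1; have := qnorm2_ge0 l2.
  nra.
have A2 : forall l, W o0 l -> forall k lk, W k lk -> lk = l.
  move=> l hl k lk hk; have hl1 := A1 l hl.
  case: (ltnP (val k) i) => hki.
    case: (posnP (val k)) => hk0.
      have ek : k = o0 by apply: val_inj.
      rewrite ek in hk; have hlk1 := A1 lk hk.
      case: (wit o1) => l1 h1.
      have e1 := unit_eq hl1 (c0j _ _ o1 hl h1 (ltac:(rewrite /=; lia))).
      have e2 := unit_eq hlk1 (c0j _ _ o1 hk h1 (ltac:(rewrite /=; lia))).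
      by rewrite -e1 -e2.
    by apply: (unit_eq hl1); apply: (c0j _ _ k hl hk); rewrite hk0 hki.
  have hkk := gQ _ _ _ _ hk hk.
  rewrite (sn_neg SP hki) (sn_neg SQ hki) mulrN1 mulNr qconj_mulr in hkk.
  have hn : qnorm2 lk = 1.
    by move/eqP: hkk; rewrite eqr_opp => /eqP /esym /qreal_inj.
  case: (sn_pos SP (k:=o0) (erefl _) hki) => r [hr er].
  case: (sn_pos SQ (k:=o0) (erefl _) hki) => r' [hr' er'].
  have h0k := gQ _ _ _ _ hl hk.
  rewrite er er' -qreal_mulC -mulrA in h0k.
  have /(congr1 (@qnorm2 R)) := h0k.
  rewrite qnorm2M qnorm2M qnorm2_conj hl1 hn !qnorm2_real mul1r mulr1 => er2.
  have err : r' = r by nra.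
  apply: unit_eq hl1 _.
  have hrn : r != 0 by rewrite gt_eqF.
  rewrite -[qconj l * lk]mul1r -qreal1 -(mulVf hrn) qrealM -mulrA -h0k err -qrealM.
  by rewrite mulVf.
case: (wit o0) => l0 h0.
exists l0; split; first exact: A1.
move=> k j; case: (wit k) => lk hk; case: (wit j) => lj hj.
by rewrite (gQ _ _ _ _ hk hj) (A2 _ h0 _ _ hk) (A2 _ h0 _ _ hj).
Qed.
End Dir1.


Section Dir2.
Variable R : realType.

Lemma phi_conj (mu x : quat R) : qconj (phi mu x) = phi mu (qconj x).
Proof. by rewrite /phi !qconjM qconjK mulrA. Qed.

Lemma vrep_gram m i (G H : 'I_m -> 'I_m -> quat R) mu : (3 <= i <= m)%N ->
  semi_normalized i G -> semi_normalized i H -> qnorm2 mu = 1 ->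
  (forall k j, G k j = qconj (G j k)) -> (forall k j, H k j = qconj (H j k)) ->
  Vrep i H = map (phi mu) (Vrep i G) -> forall k j, H k j = phi mu (G k j).
Proof.
move=> /andP [hi3 him] SG SH hmu hG hH e.
case: (unit_conj hmu) => _ hcm.
have up : forall k j : 'I_m, (k <= j)%N -> H k j = phi mu (G k j).
  move=> k j; rewrite leq_eqVlt => /orP [/eqP ekj|hkj].
    have -> : j = k by apply: val_inj.
    case: (ltnP k i) => hki.
      by rewrite (sn_null SG hki) (sn_null SH hki) /phi mulr0 mul0r.
    by rewrite (sn_neg SG hki) (sn_neg SH hki) /phi mulrN1 mulNr hcm.
  case: (posnP k) => hk0.
    case: (ltnP j i) => hji.
      have hj : (1 <= j < i)%N by rewrite hji andbT; lia.
      by rewrite (sn_one SG hk0 hj) (sn_one SH hk0 hj) /phi mulr1 hcm.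
    have hmem : ((0%N, val j) \in idxs m i) by apply: mem_idxs0; rewrite hji ltn_ord.
    have := Vrep_phi_inv e hmem.
    by rewrite /= -hk0 !gentry_ord.
  have hmem : ((val k, val j) \in idxs m i) by apply: mem_idxs hk0 _; rewrite hkj ltn_ord.
  have := Vrep_phi_inv e hmem.
  by rewrite /= !gentry_ord.
move=> k j; case: (leqP k j) => hkj; first exact: up.
by rewrite hH up ?(ltnW hkj) // phi_conj -hG.
Qed.
End Dir2.

Unset Implicit Arguments.
Theorem lemma8p8 (R : realType) (n m i : nat) (P Q : 'I_m -> qvec R n) :
  (1 <= n)%N -> (4 <= m)%N -> (3 <= i <= m)%N ->
  config i P -> config i Q ->
  semi_normalized i (gram P) -> semi_normalized i (gram Q) ->
  (congruent P Q <->
   (forall W, orbitV (Vrep i (gram P)) W <-> orbitV (Vrep i (gram Q)) W)).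
Proof.
move=> hn hm hi CP CQ SP SQ.
have hermP : forall k j, gram P k j = qconj (gram P j k) by move=> k j; exact: hform_sym.
have hermQ : forall k j, gram Q k j = qconj (gram Q j k) by move=> k j; exact: hform_sym.
split.
  move=> hc; case: (cong_gram hi SP SQ hc) => mu [hmu hG].
  move=> W; rewrite (Vrep_phi i hG); exact: orbit_map.
move=> hO.
have : orbitV (Vrep i (gram P)) (Vrep i (gram Q)) by apply/hO; exact: orbit_refl.
case=> mu [hmu e].
have e' : Vrep i (gram Q) = map (phi mu) (Vrep i (gram P)) by exact: e.
have hG := vrep_gram hi SP SQ hmu hermP hermQ e'.
case: (unit_conj hmu) => hc1 hc2.
pose Q' k := fun r => Q k r * qconj mu.
have hG' : forall k j, hform (P k) (P j) = hform (Q' k) (Q' j).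
  move=> k j; rewrite /Q' hformZl hformZr qconjK.
  have -> : hform (Q k) (Q j) = gram Q j k by [].
  by rewrite hG /phi !mulrA hc1 mul1r -mulrA hc1 mulr1.
move: hi => /andP [hi3 him].
have hm0 : (0 < m)%N by lia. have hm1 : (1 < m)%N by lia.
pose o0 := Ordinal hm0; pose o1 := Ordinal hm1.
have h00 : hform (P o0) (P o0) = 0 by apply: (sn_null SP (k:=o0)); rewrite /=; lia.
have h11 : hform (P o1) (P o1) = 0 by apply: (sn_null SP (k:=o1)); rewrite /=; lia.
have h10 : hform (P o1) (P o0) = 1.
  by apply: (sn_one SP (k:=o0) (j:=o1)) => //=; lia.
case: (witt hG' h00 h11 h10) => A [hA hAP].
exists A; split => // k; exists mu; split.
  move=> h0; move: hmu; rewrite h0 /qnorm2 /= => /eqP.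
  by rewrite expr0n /= !addr0 eq_sym oner_eq0.
move=> r; rewrite hAP /Q'; change (Q k r = Q k r * qconj mu * mu); by rewrite -mulrA hc2 mulr1.
Qed.
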